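(* Let $\eta,\theta\in(0,1]$, let $k\ge2$, and let $C_{\rm out}\subseteq[Q]^n$ be a code of relative Hamming distance at least $1-\eta$. Let $C_{\rm in}\subseteq[k]^m$ be a code with $nQ$ codewords $e(i,\alpha)$, one for each $(i,\alpha)\in[n]\times[Q]$, such that for any two distinct codewords $c_1,c_2\in C_{\rm in}$ and any common subsequence $s$ of $c_1,c_2$ we have $\operatorname{span}s\ge(k+\sqrt k)\operatorname{len}s-\theta km$. Let $C_{\rm concat}\subseteq[k]^N$, $N=nm$, consist of, for each $c=(c_1,\dots,c_n)\in C_{\rm out}$, the word $e(1,c_1)e(2,c_2)\cdots e(n,c_n)$. Then \[\mathrm{LCS}(C_{\rm concat})\le\left(\frac2{k+\sqrt k}+2\theta+\eta\right)N.\]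
   Context: The relative Hamming distance of a code of block length $n$ is the minimum over distinct codewords $c,\tilde c$ of $\Delta(c,\tilde c)/n$, where $\Delta$ is the number of positions where they differ. Symbols are distinguishable positions. A common subsequence of words $w_1,w_2$ is a pair $s=(w_1',w_2')$ of subsequences equal as words; $\operatorname{len}s$ is their common length; the span of $w'$ in $w$ is the length of the shortest block of consecutive symbols of $w$ containing $w'$, and $\operatorname{span}s=\operatorname{span}_{w_1}w_1'+\operatorname{span}_{w_2}w_2'$. $\mathrm{LCS}(C)$ is the maximum over distinct codewords of the length of a longest common subsequence. *)

(* Defs.v *)
From HB Require Import structures.
From mathcomp Require Import all_boot all_order all_algebra.
From mathcomp Require Import reals.
Set Implicit Arguments. Unset Strict Implicit. Unset Printing Implicit Defensive.
Import Order.TTheory GRing.Theory Num.Theory.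

(* Words are sequences over an alphabet T.  A subsequence w' of a word w is
   represented by the strictly increasing list of (0-based) positions of w it
   uses (symbols are distinguishable positions). *)
Definition subseq_pos (T : Type) (w : seq T) (I : seq nat) : bool :=
  sorted ltn I && all (fun i => i < size w) I.

Definition common_subseq (T : eqType) (w1 w2 : seq T) (I1 I2 : seq nat) : bool :=
  [&& subseq_pos w1 I1, subseq_pos w2 I2, size I1 == size I2 &
      map (onth w1) I1 == map (onth w2) I2].

Definition cs_len (I1 I2 : seq nat) : nat := size I1.

Definition span_pos (I : seq nat) : nat :=
  if I is i :: _ then (last i I - i).+1 else 0.

Definition cs_span (I1 I2 : seq nat) : nat := span_pos I1 + span_pos I2.

Definition concat_word (n Q k : nat) (e : 'I_n -> 'I_Q -> seq 'I_k)
  (c : {ffun 'I_n -> 'I_Q}) : seq 'I_k :=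
  flatten [seq e i (c i) | i <- enum 'I_n].

Definition hamming (n Q : nat) (c c' : {ffun 'I_n -> 'I_Q}) : nat :=
  #|[set i | c i != c' i]|.

(* Main.v *)
Require Import Defs.
From HB Require Import structures.
From mathcomp Require Import all_boot all_order all_algebra.
From mathcomp Require Import reals.
From mathcomp Require Import zify ring lra.
Import Order.TTheory GRing.Theory Num.Theory.
Definition lt2 : rel (nat * nat) := fun x y => (x.1 < y.1) && (x.2 < y.2).

Lemma lt2_trans : transitive lt2.
Proof. move=> y x z /andP[a b] /andP[c d]; apply/andP; split; lia. Qed.

Section Comb.
Variable m : nat.
Definition blk (x : nat * nat) := (x.1 %/ m, x.2 %/ m).

Fixpoint spl (b : nat * nat) (s : seq (nat * nat)) :=
  match s with
  | [::] => ([::], [::])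
  | y :: s' => if blk y == b then (y :: (spl b s').1, (spl b s').2) else ([::], s)
  end.

Lemma spl_cat b s : s = (spl b s).1 ++ (spl b s).2.
Proof. elim: s => //= y s IH; case: ifP => //= _; by rewrite -IH. Qed.

Lemma spl_all b s : all (fun y => blk y == b) (spl b s).1.
Proof. elim: s => //= y s IH; case: ifP => //= ->; exact IH. Qed.

Lemma spl_rest b s : (spl b s).2 = [::] \/
  exists y v, (spl b s).2 = y :: v /\ blk y != b.
Proof.
elim: s => /=; first by left.
move=> y s IH; case: ifP => /= H; first exact IH.
by right; exists y, s; rewrite H.
Qed.

Lemma grp_size x u : (0 < m)%N -> path lt2 x u ->
  all (fun y => blk y == blk x) u -> ((size u).+1 <= m)%N.
Proof.
move=> m0 Hp Ha.
have U : uniq (map fst (x :: u)).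
  apply: (@sorted_uniq _ ltn); [exact: ltn_trans| exact: ltnn|].
  rewrite /= path_map; apply: sub_path Hp => a b /andP[]//.
have := uniq_leq_size U (s2 := iota (x.1 %/ m * m) m).
rewrite size_map size_iota; apply => p /mapP[y Hy ->].
have Hb : y.1 %/ m = x.1 %/ m.
  move: Hy; rewrite inE => /orP[/eqP->//|Hy].
  by move/allP: Ha => /(_ y Hy) /eqP [].
rewrite mem_iota; have := divn_eq y.1 m; have := ltn_pmod y.1 m0.
rewrite Hb; move: (x.1 %/ m * m) (y.1 %% m) => a b; rewrite /=; lia.
Qed.

Variable n : nat.
Variable D : pred nat.
Definition cnt (a : nat) := count (fun i => (a <= i) && D i)%N (iota 0 n).

Lemma cnt_mono a b : (a <= b)%N -> (cnt b <= cnt a)%N.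
Proof. move=> ab; apply: sub_count => i /andP[h ->]; rewrite andbT; lia. Qed.

Lemma cnt_strict a b : (a < b)%N -> (a < n)%N -> D a -> (cnt b).+1 <= cnt a.
Proof.
move=> ab an Da.
have H : forall s, (count (fun i => (a < i) && D i) s + count (pred1 a) s
   <= count (fun i => (a <= i) && D i) s)%N.
  elim=> //= h s IH.
  case: (ltngtP a h) => /= [ah|ha|E].
  - lia.
  - lia.
  - rewrite -E Da /=; lia.
have c1 : count (pred1 a) (iota 0 n) = 1%N.
  by rewrite count_uniq_mem ?iota_uniq // mem_iota add0n an.
have := H (iota 0 n); rewrite c1 addn1 => H2.
apply: leq_trans H2; rewrite ltnS; exact: cnt_mono.
Qed.

End Comb.

Local Open Scope ring_scope.

Definition FF {R : realType} (K c : R) (n m : nat) (D : pred nat) (P Q : nat) : R :=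
  let N := (n * m)%N in
  (N%:R - P%:R) + (N%:R - Q%:R) + c * (2 * n%:R - (P %/ m)%N%:R - (Q %/ m)%N%:R)
  + K * m%:R * (cnt n D (maxn (P %/ m)%N (Q %/ m)%N))%:R.
Definition inrg (n m : nat) (y : nat * nat) := (y.1 < n * m)%N && (y.2 < n * m)%N.
Definition diag (m : nat) (D : pred nat) (x : nat * nat) := ((x.1 %/ m)%N == (x.2 %/ m)%N) && D (x.1 %/ m)%N.

Lemma main_bound (R : realType) (K c : R) (n m : nat) (D : pred nat) (ok : pred (nat * nat)) :
  0 <= K -> 0 <= c -> (forall x u, path lt2 x u -> all (fun y => blk m y == blk m x) u ->
  all (inrg n m) (x :: u) -> all ok (x :: u) -> ~~ diag m D x ->
  K * (size u).+1%:R - c <= ((last x u).1 - x.1).+1%:R + ((last x u).2 - x.2).+1%:R) ->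
  forall s x, path lt2 x s -> all (inrg n m) (x :: s) -> all ok (x :: s) ->
  K * (size s).+1%:R <= FF K c n m D x.1 x.2.
Proof.
move=> K0 c0 Hgrp s x.
elim: {s}(size s).+1 {-2}s (ltnSn (size s)) x => // t IH s Hs x Hp Hr Ho.
have Hc := spl_cat m (blk m x) s. have Ha := spl_all m (blk m x) s.
have Hrest := spl_rest m (blk m x) s.
move: Hc Ha Hrest; case: (spl m (blk m x) s) => u v /= Hc Ha Hrest.
rewrite {}Hc in Hs Hp Hr Ho *.
rewrite cat_path in Hp; case/andP: Hp => Hpu Hpv.
move: (Hr) => /= /andP[/andP[x1N x2N] Hr'].
have m0 : (0 < m)%N by move: x1N; case: (m) => //; rewrite muln0.
set i := (x.1 %/ m)%N; set j := (x.2 %/ m)%N.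
have iN : (i < n)%N by rewrite ltn_divLR.
have jN : (j < n)%N by rewrite ltn_divLR.
set lu := last x u.
have Hlu : lu \in x :: u by exact: mem_last.
have Hxlu : (x.1 <= lu.1)%N && (x.2 <= lu.2)%N.
  move: Hlu; rewrite inE => /orP[/eqP->|H]; first by rewrite !leqnn.
  have := order_path_min lt2_trans Hpu; move/allP/(_ _ H)/andP => [a b].
  by rewrite (ltnW a) (ltnW b).
have Hrlu : inrg n m lu by move/allP: Hr; apply; rewrite -cat_cons mem_cat Hlu.
move: Hxlu Hrlu => /andP[xl1 xl2] /andP[l1N l2N].
have Hru : all (inrg n m) (x :: u) by move: Hr; rewrite /= all_cat => /andP[->] /andP[].
have Hou : all ok (x :: u) by move: Ho; rewrite /= all_cat => /andP[->] /andP[].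
have Km : 0 <= K * m%:R by apply: mulr_ge0.
rewrite size_cat.
have cntm : forall a b : nat, (a <= b)%N ->
   K * m%:R * (cnt n D b)%:R <= K * m%:R * (cnt n D a)%:R.
  by move=> a b ab; apply: ler_wpM2l => //; rewrite ler_nat; apply: cnt_mono.
have cnts : forall a b : nat, (a < b)%N -> (a < n)%N -> D a ->
   K * m%:R * (cnt n D b)%:R + K * m%:R <= K * m%:R * (cnt n D a)%:R.
  move=> a b ab an Da; have h : ((cnt n D b + 1)%N%:R <= (cnt n D a)%:R :> R).
    by rewrite ler_nat addn1; apply: cnt_strict.
  by have := ler_wpM2l Km h; rewrite natrD mulrDr mulr1.
have cnt0 : forall a, 0 <= K * m%:R * (cnt n D a)%:R by move=> a; apply: mulr_ge0.
have ctm : forall a b : nat, (a <= b)%N -> 0 <= c * (b%:R - a%:R) by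
  move=> a b ab; apply: mulr_ge0 => //; rewrite subr_ge0 ler_nat.
have G1 : diag m D x -> K * (size u).+1%:R <= K * m%:R.
  by move=> dx; apply: ler_wpM2l => //; rewrite ler_nat; exact: (@grp_size m x u m0 Hpu Ha).
have G2 : ~~ diag m D x -> K * (size u).+1%:R - c <=
     (lu.1%:R - x.1%:R + 1) + (lu.2%:R - x.2%:R + 1).
  move=> nd; have := Hgrp x u Hpu Ha Hru Hou nd.
  by rewrite -/lu -!natr1 !natrB.
have rl1 : lu.1%:R + 1 <= (n * m)%N%:R :> R by rewrite natr1 ler_nat.
have rl2 : lu.2%:R + 1 <= (n * m)%N%:R :> R by rewrite natr1 ler_nat.
have rx1 : x.1%:R <= lu.1%:R :> R by rewrite ler_nat.
have rx2 : x.2%:R <= lu.2%:R :> R by rewrite ler_nat.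
have rij : (i + j + 2)%N%:R <= (2 * n)%N%:R :> R.
  rewrite ler_nat; clearbody i j; clear -iN jN; lia.
rewrite !natrD ?mulr0n ?addr0 in rij.
have hij1 : (i + j + 1 <= 2 * n)%N by clearbody i j; clear -iN jN; lia.
have cij := ctm _ _ hij1; rewrite !natrD ?natrM ?mulr0n ?addr0 in cij.
case: Hrest => [->|[y [v' [Ev Hyb]]]]; last subst v.
  rewrite addn0 /FF /= -/i -/j.
  case: (boolP (diag m D x)) => dx.
    have := G1 dx; move: dx; rewrite /diag -/i -/j => /andP[/eqP ij Di].
    have := cnts i i.+1 (ltnSn _) iN Di; have := cnt0 i.+1.
    rewrite ij maxnn; rewrite ij in cij; move=> h1 h2 h3.
    have e3 : c * (2 * n%:R - j%:R - j%:R) = c * (n%:R + n%:R - (j%:R + j%:R + 1)) + c by ring.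
    lra.
  have := G2 dx. have := cnt0 (maxn i j). move=> h1 h2.
  have e3 : c * (2 * n%:R - i%:R - j%:R) = c * (n%:R + n%:R - (i%:R + j%:R + 1)) + c by ring.
  lra.
move: Hpv => /= /andP[Hl Hpv']; move: Hl; rewrite /lt2 => /andP[ly1 ly2].
have Hsv : (size v' < t)%N by move: Hs; rewrite size_cat /=; clear; lia.
have Hrv : all (inrg n m) (y :: v') by move: Hr'; rewrite all_cat => /andP[].
have Hov : all ok (y :: v') by move: Ho; rewrite /= all_cat => /andP[_ /andP[]].
have IHv := IH v' Hsv y Hpv' Hrv Hov.
rewrite /FF /= in IHv; rewrite /FF /= -/i -/j.
have eK : K * (size u + size (y :: v')).+1%:R = K * (size u).+1%:R + K * (size v').+1%:R.
  by rewrite -mulrDr -natrD /= addSn addnS.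
rewrite eK.
have ry1 : lu.1%:R + 1 <= y.1%:R :> R by rewrite natr1 ler_nat.
have ry2 : lu.2%:R + 1 <= y.2%:R :> R by rewrite natr1 ler_nat.
have yi : (i <= y.1 %/ m)%N by apply: leq_div2r; exact: leq_trans xl1 (ltnW ly1).
have yj : (j <= y.2 %/ m)%N by apply: leq_div2r; exact: leq_trans xl2 (ltnW ly2).
move: IHv Hyb yi yj; rewrite /blk -/i -/j.
move: (y.1 %/ m)%N (y.2 %/ m)%N => a b IHv Hyb yi yj.
have hab : (i + j + 1 <= a + b)%N.
  move: Hyb; rewrite xpair_eqE negb_and => H; clearbody i j; clear -H yi yj.
  case/orP: H => /eqP H; lia.
have cab := ctm _ _ hab; rewrite !natrD in cab.
have eab : c * (2 * n%:R - i%:R - j%:R) =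
   c * (2 * n%:R - a%:R - b%:R) + c * (a%:R + b%:R - (i%:R + j%:R + 1)) + c by ring.
case: (boolP (diag m D x)) => dx.
  have := G1 dx; move: dx; rewrite /diag -/i -/j => /andP[/eqP ij Di].
  have iab : (i < maxn a b)%N.
    move: Hyb; rewrite xpair_eqE negb_and -ij => H; clearbody i j; clear -H yi yj ij.
    case/orP: H => /eqP H; lia.
  have := cnts i (maxn a b) iab iN Di.
  rewrite -ij maxnn => h1 h2; rewrite -ij in eab cab.
  have := cnt0 (maxn a b) => h3.
  lra.
have := G2 dx => h2.
have := cntm (maxn i j) (maxn a b) ltac:(clearbody i j; clear -yi yj; lia) => h3.
lra.
Qed.

Local Close Scope ring_scope.

Lemma size_flat (T : Type) m (B : seq (seq T)) :
  all (fun b => size b == m) B -> size (flatten B) = size B * m.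
Proof. elim: B => //= b B IH /andP[/eqP sb H]; rewrite size_cat sb IH // mulSn. Qed.

Lemma onth_flat (T : Type) m (B : seq (seq T)) p : 0 < m ->
  all (fun b => size b == m) B ->
  onth (flatten B) p = onth (nth [::] B (p %/ m)) (p %% m).
Proof.
move=> m0; elim: B p => [|b B IH] p /=.
  by move=> _; rewrite nth_nil !onth0n.
move=> /andP[/eqP sb H]; rewrite onth_cat sb.
case: ltnP => pm.
  by rewrite divn_small // modn_small.
rewrite IH //.
have e1 : p %/ m = ((p - m) %/ m).+1.
  by rewrite -{1}(subnK pm) divnDr ?dvdnn // divnn m0 addn1.
have e2 : p %% m = (p - m) %% m by rewrite -{1}(subnK pm) modnDr.
by rewrite e1 e2.
Qed.

Lemma nthB (n Q k : nat) (e : 'I_n -> 'I_Q -> seq 'I_k) (c : {ffun 'I_n -> 'I_Q}) i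
  (Hi : i < n) : nth [::] [seq e j (c j) | j <- enum 'I_n] i = e (Ordinal Hi) (c (Ordinal Hi)).
Proof.
rewrite (nth_map (Ordinal Hi)) ?size_enum_ord //.
by congr (e _ (c _)); apply: val_inj; rewrite /= nth_enum_ord.
Qed.

Lemma zip_path I1 I2 a b : size I1 = size I2 -> path ltn a I1 -> path ltn b I2 ->
  path lt2 (a, b) (zip I1 I2).
Proof.
elim: I1 I2 a b => [|x I1 IH] [|y I2] a b //= [] sz /andP[ax p1] /andP[bb p2].
by rewrite /lt2 /= ax bb /=; apply: IH.
Qed.

Lemma zip_all (T : eqType) (w1 w2 : seq T) N I1 I2 : size I1 = size I2 ->
  all (fun i => i < N) I1 -> all (fun i => i < N) I2 ->
  map (onth w1) I1 = map (onth w2) I2 ->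
  all (fun y => (y.1 < N) && (y.2 < N)) (zip I1 I2) /\
  all (fun y => onth w1 y.1 == onth w2 y.2) (zip I1 I2).
Proof.
elim: I1 I2 => [|x I1 IH] [|y I2] //= [] sz /andP[xN a1] /andP[yN a2] [exy em].
have [h1 h2] := IH I2 sz a1 a2 em.
by rewrite xN yN h1 exy eqxx h2.
Qed.

Local Open Scope ring_scope.

Lemma grp_lemma (R : realType) (theta : R) (k n m Q : nat) (e : 'I_n -> 'I_Q -> seq 'I_k)
  (c1 c2 : {ffun 'I_n -> 'I_Q}) :
  (forall i a, size (e i a) = m) ->
  (forall i a j b, e i a = e j b -> (i, a) = (j, b)) ->
  (forall i a j b (I1 I2 : seq nat), e i a != e j b ->
     common_subseq (e i a) (e j b) I1 I2 ->
     (k%:R + Num.sqrt k%:R) * (cs_len I1 I2)%:R - theta * k%:R * m%:R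
       <= (cs_span I1 I2)%:R) ->
  forall x u, path lt2 x u -> all (fun y => blk m y == blk m x) u ->
  all (inrg n m) (x :: u) ->
  all (fun y => onth (concat_word e c1) y.1 == onth (concat_word e c2) y.2) (x :: u) ->
  ~~ diag m (fun i => [exists io : 'I_n, (val io == i) && (c1 io == c2 io)]) x ->
  (k%:R + Num.sqrt k%:R) * (size u).+1%:R - theta * k%:R * m%:R <=
   ((last x u).1 - x.1)%N.+1%:R + ((last x u).2 - x.2)%N.+1%:R.
Proof.
move=> Hsz Hinj Hin x u Hp Ha Hr Ho Hd.
move: (Hr) => /= /andP[/andP[x1N x2N] _].
have m0 : (0 < m)%N by move: x1N; case: (m) => //; rewrite muln0.
have iN : (x.1 %/ m < n)%N by rewrite ltn_divLR.
have jN : (x.2 %/ m < n)%N by rewrite ltn_divLR.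
set io := Ordinal iN; set jo := Ordinal jN.
have Hall : forall y, y \in x :: u -> (y.1 %/ m = x.1 %/ m)%N /\ (y.2 %/ m = x.2 %/ m)%N.
  move=> y; rewrite inE => /orP[/eqP -> //|Hy].
  by move/allP: Ha => /(_ y Hy) /eqP [-> ->].
have szB : forall c : {ffun 'I_n -> 'I_Q},
    all (fun b => size b == m) [seq e j (c j) | j <- enum 'I_n].
  by move=> c; apply/allP => b /mapP[j _ ->]; rewrite Hsz.
have W1 : forall y, y \in x :: u ->
    onth (concat_word e c1) y.1 = onth (e io (c1 io)) (y.1 %% m)%N.
  move=> y Hy; rewrite /concat_word (@onth_flat _ m _ y.1 m0 (szB c1)).
  by have [-> _] := Hall y Hy; rewrite (@nthB n Q k e c1 _ iN).
have W2 : forall y, y \in x :: u ->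
    onth (concat_word e c2) y.2 = onth (e jo (c2 jo)) (y.2 %% m)%N.
  move=> y Hy; rewrite /concat_word (@onth_flat _ m _ y.2 m0 (szB c2)).
  by have [_ ->] := Hall y Hy; rewrite (@nthB n Q k e c2 _ jN).
have Hne : e io (c1 io) != e jo (c2 jo).
  apply/negP => /eqP /Hinj [E1 E2]; move/negP: Hd; apply.
  have Eio : io = jo by apply: val_inj.
  rewrite /diag E1 eqxx /=; apply/existsP; exists jo; rewrite eqxx /=.
  by apply/eqP; rewrite -{1}Eio E2.
pose f1 := fun y : nat * nat => (y.1 %% m)%N.
pose f2 := fun y : nat * nat => (y.2 %% m)%N.
have modlt : forall q a b : nat, (a %/ m = q)%N -> (b %/ m = q)%N -> (a < b)%N ->
    (a %% m < b %% m)%N.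
  move=> q a b Ha' Hb' ab; have := divn_eq a m; have := divn_eq b m.
  rewrite Ha' Hb'; move: (q * m)%N (a %% m)%N (b %% m)%N => z r s; lia.
have Hcs : common_subseq (e io (c1 io)) (e jo (c2 jo)) (map f1 (x :: u)) (map f2 (x :: u)).
  apply/and4P; split.
  - apply/andP; split.
      apply: (homo_path_in (P := [pred y : nat * nat | (y.1 %/ m)%N == (x.1 %/ m)%N]) _ _ Hp).
        move=> y z; rewrite !inE => /eqP Hy /eqP Hz /andP[yz _].
        exact: modlt Hy Hz yz.
      by apply/allP => y /Hall [Hy _]; apply/eqP.
    by apply/allP => r /mapP[y _ ->]; rewrite Hsz ltn_pmod.
  - apply/andP; split.
      apply: (homo_path_in (P := [pred y : nat * nat | (y.2 %/ m)%N == (x.2 %/ m)%N]) _ _ Hp).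
        move=> y z; rewrite !inE => /eqP Hy /eqP Hz /andP[_ yz].
        exact: modlt Hy Hz yz.
      by apply/allP => y /Hall [_ Hy]; apply/eqP.
    by apply/allP => r /mapP[y _ ->]; rewrite Hsz ltn_pmod.
  - by rewrite !size_map.
  - apply/eqP; rewrite -!map_comp. apply/eq_in_map => y Hy /=.
    rewrite /f1 /f2 -W1 // -W2 //; apply/eqP.
    by move/allP: Ho => /(_ y Hy).
have := Hin _ _ _ _ _ _ Hne Hcs.
rewrite /cs_len /cs_span size_map /= !last_map.
have [L1 L2] := Hall (last x u) (mem_last x u).
have E1 : (f1 (last x u) - f1 x = (last x u).1 - x.1)%N.
  rewrite /f1; have := divn_eq (last x u).1 m; have := divn_eq x.1 m.
  rewrite L1; move: (x.1 %/ m * m)%N (x.1 %% m)%N ((last x u).1 %% m)%N => z r s; lia.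
have E2 : (f2 (last x u) - f2 x = (last x u).2 - x.2)%N.
  rewrite /f2; have := divn_eq (last x u).2 m; have := divn_eq x.2 m.
  rewrite L2; move: (x.2 %/ m * m)%N (x.2 %% m)%N ((last x u).2 %% m)%N => z r s; lia.
by rewrite E1 E2 natrD.
Qed.

Lemma count_enum_ord n (P : pred 'I_n) : count P (enum 'I_n) = #|P|.
Proof. by rewrite cardE -deprecated_filter_index_enum size_filter enumT. Qed.

Theorem lemma5p1 (R : realType) (eta theta : R) (k n m Q : nat)
  (C_out : {set {ffun 'I_n -> 'I_Q}}) (e : 'I_n -> 'I_Q -> seq 'I_k) :
  0 < eta -> eta <= 1 -> 0 < theta -> theta <= 1 -> (2 <= k)%N ->
  (* C_out has relative Hamming distance at least 1 - eta *)
  (forall c c', c \in C_out -> c' \in C_out -> c != c' ->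
     (1 - eta) * n%:R <= (hamming c c')%:R) ->
  (* C_in is a code in [k]^m with nQ distinct codewords e(i,alpha) *)
  (forall i a, size (e i a) = m) ->
  (forall i a j b, e i a = e j b -> (i, a) = (j, b)) ->
  (* span condition for distinct inner codewords *)
  (forall i a j b (I1 I2 : seq nat), e i a != e j b ->
     common_subseq (e i a) (e j b) I1 I2 ->
     (k%:R + Num.sqrt k%:R) * (cs_len I1 I2)%:R - theta * k%:R * m%:R
       <= (cs_span I1 I2)%:R) ->
  (* LCS(C_concat) <= (2/(k+sqrt k) + 2 theta + eta) N, N = n m *)
  (forall c1 c2 (I1 I2 : seq nat), c1 \in C_out -> c2 \in C_out ->
     concat_word e c1 != concat_word e c2 ->
     common_subseq (concat_word e c1) (concat_word e c2) I1 I2 ->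
     (cs_len I1 I2)%:R
       <= (2 / (k%:R + Num.sqrt k%:R) + 2 * theta + eta) * (n * m)%:R).
Proof.
move=> eta0 eta1 th0 th1 k2 Hham Hsz Hinj Hin c1 c2 I1 I2 Hc1 Hc2 Hneq Hcs.
have sq0 := sqrtr_ge0 (k%:R : R).
have kpos : 0 < k%:R :> R by rewrite ltr0n; apply: leq_trans k2.
have K0 : 0 < k%:R + Num.sqrt k%:R :> R by lra.
have kK : k%:R <= k%:R + Num.sqrt k%:R :> R by lra.
have cc0 : 0 <= theta * k%:R * m%:R by apply: mulr_ge0; [apply: mulr_ge0; lra|].
set D := fun i : nat => [exists io : 'I_n, (val io == i) && (c1 io == c2 io)].
have Hgrp := @grp_lemma R theta k n m Q e c1 c2 Hsz Hinj Hin.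
have szB : forall c : {ffun 'I_n -> 'I_Q},
    all (fun b => size b == m) [seq e j (c j) | j <- enum 'I_n].
  by move=> c; apply/allP => b /mapP[j _ ->]; rewrite Hsz.
have sw : forall c : {ffun 'I_n -> 'I_Q}, size (concat_word e c) = (n * m)%N.
  by move=> c; rewrite /concat_word (@size_flat _ m) ?szB // size_map size_enum_ord.
have rhs0 : 0 <= (2 / (k%:R + Num.sqrt k%:R) + 2 * theta + eta) * (n * m)%N%:R :> R.
  apply: mulr_ge0 => //; have : 0 <= 2 / (k%:R + Num.sqrt k%:R) :> R.
    by apply: divr_ge0 => //; lra.
  lra.
move: Hcs; rewrite /common_subseq /subseq_pos => /and4P[/andP[s1 a1] /andP[s2 a2] /eqP sz /eqP mp].
rewrite /cs_len.
case: I1 s1 a1 sz mp => [|p1 J1] s1 a1 sz mp; first by [].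
case: I2 s2 a2 sz mp => [|p2 J2] s2 a2 sz mp; first by [].
rewrite sw in a1; rewrite sw in a2.
have [Hall1 Hall2] := @zip_all _ _ _ _ _ _ sz a1 a2 mp.
move: sz => /= [sz].
have Hpath := @zip_path _ _ _ _ sz s1 s2.
have MB := @main_bound R _ _ n m D _ (ltW K0) cc0 Hgrp (zip J1 J2) (p1, p2) Hpath Hall1 Hall2.
rewrite size_zip sz minnn in MB.
rewrite /FF /= in MB.
have ha : 0 <= (theta * k%:R * m%:R) * ((p1 %/ m)%N%:R + (p2 %/ m)%N%:R) by apply: mulr_ge0 => //; apply: addr_ge0.
have hb : (theta * k%:R * m%:R) * (2 * n%:R - (p1 %/ m)%N%:R - (p2 %/ m)%N%:R) =
   (theta * k%:R * m%:R) * (2 * n%:R) - (theta * k%:R * m%:R) * ((p1 %/ m)%N%:R + (p2 %/ m)%N%:R) by ring.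
have Km : 0 <= (k%:R + Num.sqrt k%:R) * m%:R :> R by apply: mulr_ge0 => //; lra.
have hc : (k%:R + Num.sqrt k%:R) * m%:R * (cnt n D (maxn (p1 %/ m)%N (p2 %/ m)%N))%:R <=
    (k%:R + Num.sqrt k%:R) * m%:R * (cnt n D 0)%:R :> R.
  by apply: ler_wpM2l => //; rewrite ler_nat; apply: cnt_mono.
have cntA : cnt n D 0 = #|[pred io : 'I_n | c1 io == c2 io]|.
  rewrite -(@count_enum_ord n [pred io : 'I_n | c1 io == c2 io]).
  rewrite /cnt -(val_enum_ord n) count_map; apply: eq_count => io /=.
  rewrite /D; apply/existsP/idP => [[jo /andP[/eqP E H]]|H].
    by have <- : jo = io by apply: val_inj.
  by exists io; rewrite eqxx.
have cneq : c1 != c2 by apply/eqP => E; move: Hneq; rewrite E eqxx.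
have HH := Hham c1 c2 Hc1 Hc2 cneq.
have hamm : (hamming c1 c2 + #|[pred io : 'I_n | c1 io == c2 io]| = n)%N.
  rewrite /hamming cardsE addnC -[RHS](card_ord n) -(cardC [pred io : 'I_n | c1 io == c2 io]).
  by congr (_ + _); apply: eq_card => io; rewrite !inE.
have Aeta : (cnt n D 0)%:R <= eta * n%:R :> R.
  have : ((hamming c1 c2)%:R + (cnt n D 0)%:R = n%:R :> R).
    by rewrite -natrD cntA hamm.
  lra.
have h3 : (k%:R + Num.sqrt k%:R) * m%:R * (cnt n D 0)%:R <=
    (k%:R + Num.sqrt k%:R) * m%:R * (eta * n%:R) by apply: ler_wpM2l.
have h2 : (theta * k%:R * m%:R) * (2 * n%:R) <=
    (theta * m%:R * n%:R * 2) * (k%:R + Num.sqrt k%:R).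
  have -> : (theta * k%:R * m%:R) * (2 * n%:R) = (theta * m%:R * n%:R * 2) * k%:R by ring.
  apply: ler_wpM2l => //; apply: mulr_ge0 => //; apply: mulr_ge0; [apply: mulr_ge0;[lra|]|] => //.
rewrite -(ler_pM2l K0).
have E : (k%:R + Num.sqrt k%:R) * ((2 / (k%:R + Num.sqrt k%:R) + 2 * theta + eta) * (n * m)%N%:R) =
   2 * (n%:R * m%:R) + (theta * m%:R * n%:R * 2) * (k%:R + Num.sqrt k%:R)
   + (k%:R + Num.sqrt k%:R) * m%:R * (eta * n%:R).
  rewrite natrM; field; lra.
rewrite E.
have p10 : 0 <= p1%:R :> R by [].
have p20 : 0 <= p2%:R :> R by [].
rewrite natrM in MB; rewrite sz.
lra.
Qed.
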